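(* Let $(M_q,\widetilde B)$ be a quantum seed and $\mathrm{inv}\subseteq[1,N]\setminus\mathrm{ex}$. For each prime element $p\in\mathbb Z[q^{\pm1/2}]$ and each $k\in\mathrm{ex}$, $$\mathcal T_q(M_q)_\ge\cap\big(p\,\mathcal T_q(\mu_kM_q)_\ge\big)=\big(p\,\mathcal T_q(M_q)_\ge\big)\cap\mathcal T_q(\mu_kM_q)_\ge.$$
   Context: $\mathcal A^{1/2}_q=\mathbb Z[q^{\pm1/2}]$; $e_1,\dots,e_N$ standard basis of $\mathbb Z^N$. For a skew-symmetric integer matrix $\Lambda$, the based quantum torus $\mathcal T_q(\Lambda)$ is the $\mathcal A^{1/2}_q$-algebra with basis $X^f$, $f\in\mathbb Z^N$, and $X^fX^g=q^{\Lambda(f,g)/2}X^{f+g}$. A toric frame of a division algebra $\mathcal F_q$ over $\mathbb Q(q^{1/2})$ is a map $M_q:\mathbb Z^N\to\mathcal F_q$ such that for some (unique) skew-symmetric $\Lambda=:\Lambda_{M_q}\in M_N(\mathbb Z)$ there is an injective $\mathcal A^{1/2}_q$-algebra map $\mathcal T_q(\Lambda)\to\mathcal F_q$, $X^f\mapsto M_q(f)$, with $\mathcal F_q$ the skew field of fractions of its image. Fix $\mathrm{ex}\subseteq[1,N]$; $\widetilde B=(b_{ij})$ is an integer matrix with rows $[1,N]$, columns $\mathrm{ex}$, $k$-th column $b^k$. $(\Lambda,\widetilde B)$ is compatible if there are positive integers $d_j$ with $\sum_kb_{kj}\lambda_{ki}=\delta_{ij}d_j$ for all $i\in[1,N]$,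 $j\in\mathrm{ex}$; a quantum seed is $(M_q,\widetilde B)$ with $(\Lambda_{M_q},\widetilde B)$ compatible. For $k\in\mathrm{ex}$, $\mu_k(M_q)$ is the toric frame with matrix $E^\top\Lambda_{M_q}E$ ($E$: $e_{ij}=\delta_{ij}$ for $j\ne k$, $e_{kk}=-1$, $e_{ik}=\max(0,-b_{ik})$ for $i\ne k$) such that $\mu_k(M_q)(e_j)=M_q(e_j)$ for $j\ne k$ and $\mu_k(M_q)(e_k)=M_q(-e_k+[b^k]_+)+M_q(-e_k-[b^k]_-)$, where $[b]_\pm$ keeps the entries $b_i$ with $\pm b_i\ge0$ and sets the others to $0$. For a toric frame $M'_q$, $\mathcal T_q(M'_q)_\ge$ is the $\mathcal A^{1/2}_q$-subalgebra of $\mathcal F_q$ generated by $M'_q(e_i)$, $i\in[1,N]$, and $M'_q(e_j)^{-1}$, $j\in\mathrm{ex}\sqcup\mathrm{inv}$. *)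

(* Defs.v *)
From HB Require Import structures.
From mathcomp Require Import all_boot all_order all_algebra.
Set Implicit Arguments. Unset Strict Implicit. Unset Printing Implicit Defensive.
Import Order.TTheory GRing.Theory Num.Theory.
Local Open Scope ring_scope.

(* Q(q^{1/2}) : the field of rational functions in t = q^{1/2} over Q. *)
Definition Kq : fieldType := {fraction {poly rat}}.
Definition qh : Kq := tofrac ('X : {poly rat}).

(* A^{1/2}_q = Z[q^{+-1/2}], as a subring of Kq *)
Definition inA (a : Kq) : Prop :=
  exists (P : {poly int}) (n : nat), a = tofrac (map_poly intr P) / qh ^+ n.

Definition dvdA (p a : Kq) : Prop := exists c, inA c /\ a = p * c.
Definition primeA (p : Kq) : Prop :=
  [/\ inA p, p != 0, ~ inA p^-1 &
      forall a b, inA a -> inA b -> dvdA p (a * b) -> dvdA p a \/ dvdA p b].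

Definition evec N (i : 'I_N) : 'rV[int]_N := delta_mx 0 i.
Definition bform N (L : 'M[int]_N) (f g : 'rV[int]_N) : int := (f *m L *m g^T) 0 0.

Definition skew N (L : 'M[int]_N) : Prop := L^T = - L.

Definition division_ring (F : unitAlgType Kq) : Prop :=
  forall x : F, x != 0 -> x \is a GRing.unit.

Inductive divgen (F : unitAlgType Kq) N (M : 'rV[int]_N -> F) : F -> Prop :=
| dg_gen f : divgen M (M f)
| dg_scal a : inA a -> divgen M (a *: 1)
| dg_add u v : divgen M u -> divgen M v -> divgen M (u + v)
| dg_opp u : divgen M u -> divgen M (- u)
| dg_mul u v : divgen M u -> divgen M v -> divgen M (u * v)
| dg_inv u : divgen M u -> divgen M u^-1.

(* M is a toric frame with matrix L:  X^f |-> M f extends to an injective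
   A-algebra map T_q(L) -> F (unital, multiplicative w.r.t. the twisted
   product, injective = A-linear independence of the images of the basis),
   and F is the skew field of fractions of its image. *)
Definition toric_frame (F : unitAlgType Kq) N (M : 'rV[int]_N -> F)
  (L : 'M[int]_N) : Prop :=
  [/\ skew L,
      M 0 = 1,
      forall f g, M f * M g = (qh ^ bform L f g) *: M (f + g),
      forall (s : seq 'rV[int]_N) (c : 'rV[int]_N -> Kq),
        uniq s -> (forall f, inA (c f)) ->
        \sum_(f <- s) c f *: M f = 0 -> forall f, f \in s -> c f = 0
    & forall x, divgen M x].

(* compatibility of (Lambda, Btilde); Btilde stored as an N x N matrix of
   which only the columns in ex are used *)
Definition compatible N (ex : {set 'I_N}) (L B : 'M[int]_N) : Prop :=
  exists d : 'I_N -> nat, forall j, j \in ex ->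
    (0 < d j)%N /\
    forall i, \sum_(k < N) B k j * L k i = (i == j)%:R * (d j)%:Z.

Definition bcol N (B : 'M[int]_N) (k : 'I_N) : 'rV[int]_N := \row_i B i k.
Definition posp N (b : 'rV[int]_N) : 'rV[int]_N := \row_i Num.max (b 0 i) 0.
Definition negp N (b : 'rV[int]_N) : 'rV[int]_N := \row_i Num.min (b 0 i) 0.

Definition mu_basis (F : unitAlgType Kq) N (M : 'rV[int]_N -> F)
  (B : 'M[int]_N) (k : 'I_N) (j : 'I_N) : F :=
  if j == k then
    M (- evec k + posp (bcol B k)) + M (- evec k - negp (bcol B k))
  else M (evec j).

(* T_q(M')_>= : A-subalgebra generated by x i (all i) and (x j)^-1, j in S,
   where x i = M'(e_i) and S = ex :|: inv *)
Inductive Tge (F : unitAlgType Kq) N (x : 'I_N -> F) (S : {set 'I_N}) : F -> Prop :=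
| tg_gen i : Tge x S (x i)
| tg_inv j : j \in S -> Tge x S (x j)^-1
| tg_scal a : inA a -> Tge x S (a *: 1)
| tg_add u v : Tge x S u -> Tge x S v -> Tge x S (u + v)
| tg_mul u v : Tge x S u -> Tge x S v -> Tge x S (u * v).

(* Main.v *)
From HB Require Import structures.
From mathcomp Require Import all_boot all_order all_algebra.
From mathcomp Require Import zify ring.
Require Import Defs.
Set Implicit Arguments. Unset Strict Implicit. Unset Printing Implicit Defensive.
Import Order.TTheory GRing.Theory Num.Theory.
Local Open Scope ring_scope.

Definition pI (P : {poly int}) : Kq := tofrac (map_poly (intr : int -> rat) P).

Lemma pID P Q : pI (P + Q) = pI P + pI Q.
Proof. by rewrite /pI !rmorphD. Qed.
Lemma pIM P Q : pI (P * Q) = pI P * pI Q.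
Proof. by rewrite /pI !rmorphM. Qed.
Lemma pIN P : pI (- P) = - pI P.
Proof. by rewrite /pI !rmorphN. Qed.
Lemma pI1 : pI 1 = 1.
Proof. by rewrite /pI !rmorph1. Qed.
Lemma pI0 : pI 0 = 0.
Proof. by rewrite /pI !rmorph0. Qed.
Lemma pIX n : pI ('X ^+ n) = qh ^+ n.
Proof. by rewrite /pI map_polyXn rmorphXn. Qed.

Lemma qh_neq0 : qh != 0.
Proof. by rewrite /qh tofrac_eq0 polyX_eq0. Qed.
Lemma qhX_neq0 n : qh ^+ n != 0.
Proof. by rewrite expf_neq0 // qh_neq0. Qed.


Lemma inAE a : inA a <-> exists P n, a = pI P / qh ^+ n.
Proof. by []. Qed.

Lemma inA0 : inA 0.
Proof. by apply/inAE; exists 0, 0%N; rewrite pI0 mul0r. Qed.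
Lemma inA1 : inA 1.
Proof. by apply/inAE; exists 1, 0%N; rewrite pI1 expr0 divr1. Qed.
Lemma inAM a b : inA a -> inA b -> inA (a * b).
Proof.
move=> /inAE[P [n ->]] /inAE[Q [m ->]]; apply/inAE.
exists (P * Q), (n + m)%N.
rewrite !pIM exprD invfM; rewrite !mulrA; congr (_ * _); rewrite -!mulrA; congr (_ * _); exact: mulrC.
Qed.
Lemma fracD_gen (K : fieldType) (a b c d : K) : c != 0 -> d != 0 ->
  a / c + b / d = (a * d + b * c) / (c * d).
Proof. by move=> hc hd; field; rewrite hc hd. Qed.
Lemma inAD a b : inA a -> inA b -> inA (a + b).
Proof.
move=> /inAE[P [n ->]] /inAE[Q [m ->]]; apply/inAE.
exists (P * 'X ^+ m + Q * 'X ^+ n), (n + m)%N.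
by rewrite pID !pIM !pIX exprD fracD_gen ?qhX_neq0.
Qed.
Lemma inAN a : inA a -> inA (- a).
Proof.
move=> /inAE[P [n ->]]; apply/inAE.
by exists (- P), n; rewrite pIN mulNr.
Qed.
Lemma inAB a b : inA a -> inA b -> inA (a - b).
Proof. by move=> ha hb; apply: inAD => //; apply: inAN. Qed.
Lemma inA_qh (z : int) : inA (qh ^ z).
Proof.
apply/inAE; case: z => n.
  by exists ('X ^+ n), 0%N; rewrite pIX expr0 divr1.
by exists 1, n.+1; rewrite pI1 div1r.
Qed.
Lemma inA_sum (T : eqType) (s : seq T) (P : pred T) (c : T -> Kq) :
  (forall t, t \in s -> inA (c t)) -> inA (\sum_(t <- s | P t) c t).
Proof.
elim: s => [|t s IH] hs; first by rewrite big_nil; apply: inA0.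
rewrite big_cons; case: (P t).
  apply: inAD; first by apply: hs; rewrite inE eqxx.
  by apply: IH => u hu; apply: hs; rewrite inE hu orbT.
by apply: IH => u hu; apply: hs; rewrite inE hu orbT.
Qed.

Lemma qhK (z : int) : qh ^ z * qh ^ (- z) = 1.
Proof. by rewrite -expfzDr ?qh_neq0 // subrr expr0z. Qed.
Lemma qh_neq0z (z : int) : qh ^ z != 0.
Proof. by rewrite expfz_neq0 // qh_neq0. Qed.
Lemma qhD (a b : int) : qh ^ (a + b) = qh ^ a * qh ^ b.
Proof. by rewrite expfzDr ?qh_neq0. Qed.


Lemma sum_part (R : zmodType) (T K : eqType) (W : seq T) (key : T -> K)
  (ks : seq K) (G : T -> R) : uniq ks -> {subset map key W <= ks} ->
  \sum_(t <- W) G t = \sum_(n <- ks) \sum_(t <- W | key t == n) G t.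
Proof.
move=> uks; elim: W => [|t W IH] sub.
  by rewrite big_nil big1 // => n _; rewrite big_nil.
have kt : key t \in ks by apply: sub; rewrite inE eqxx.
rewrite big_cons IH; last by move=> n hn; apply: sub; rewrite /= inE hn orbT.
have ifadd (b : bool) (x y : R) : (if b then x + y else y) = (if b then x else 0) + y.
  by case: b; rewrite ?add0r.
under [in RHS]eq_bigr => n _ do rewrite big_cons ifadd.
rewrite big_split /=; congr (_ + _).
rewrite (bigD1_seq (key t)) //= eqxx big1 ?addr0 // => n hn.
by rewrite eq_sym (negbTE hn).
Qed.

Section Frame.
Variables (F : unitAlgType Kq) (N : nat) (M : 'rV[int]_N -> F) (L : 'M[int]_N).
Hypothesis skL : skew L.
Hypothesis M0 : M 0 = 1.
Hypothesis MM : forall f g, M f * M g = (qh ^ bform L f g) *: M (f + g).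
Hypothesis Mind : forall (s : seq 'rV[int]_N) (c : 'rV[int]_N -> Kq),
        uniq s -> (forall f, inA (c f)) ->
        \sum_(f <- s) c f *: M f = 0 -> forall f, f \in s -> c f = 0.

Local Notation V := 'rV[int]_N.
Local Notation lam := (bform L).

Lemma lamDl f g h : lam (f + g) h = lam f h + lam g h.
Proof. by rewrite /bform !mulmxDl mxE. Qed.
Lemma lamDr f g h : lam f (g + h) = lam f g + lam f h.
Proof. by rewrite /bform linearD /= mulmxDr mxE. Qed.
Lemma lamNl f g : lam (- f) g = - lam f g.
Proof. by rewrite /bform !mulNmx mxE. Qed.
Lemma lamNr f g : lam f (- g) = - lam f g.
Proof. by rewrite /bform linearN /= mulmxN mxE. Qed.
Lemma lamZl (z : int) f g : lam (z *: f) g = z * lam f g.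
Proof. by rewrite /bform -!scalemxAl mxE. Qed.
Lemma lamZr (z : int) f g : lam f (z *: g) = z * lam f g.
Proof. by rewrite /bform linearZ /= -scalemxAr mxE. Qed.
Lemma lam_anti f g : lam g f = - lam f g.
Proof.
have h (A : 'M[int]_(1,1)) : A 0 0 = (A^T) 0 0 by rewrite mxE.
rewrite /bform h !trmx_mul trmxK skL mulmxA mulmxN mulNmx.
by rewrite [in LHS]mxE.
Qed.
Lemma lam_self f : lam f f = 0.
Proof. have := lam_anti f f; lia. Qed.

Lemma M_inv f : M f * M (- f) = 1.
Proof. by rewrite MM subrr lamNr lam_self oppr0 expr0z scale1r M0. Qed.
Lemma M_inv' f : M (- f) * M f = 1.
Proof. by rewrite -{2}(opprK f) M_inv. Qed.
Lemma M_unit f : M f \is a GRing.unit.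
Proof. by apply/unitrP; exists (M (- f)); rewrite M_inv M_inv'. Qed.
Lemma M_V f : (M f)^-1 = M (- f).
Proof. by rewrite -[RHS]mul1r -(mulVr (M_unit f)) -mulrA M_inv mulr1. Qed.
Lemma Mcomm f g : M f * M g = qh ^ (2 * lam f g) *: (M g * M f).
Proof.
rewrite !MM scalerA -qhD addrC lam_anti; congr (qh ^ _ *: _); lia.
Qed.

Definition ev (U : seq (Kq * V)) : F := \sum_(u <- U) u.1 *: M u.2.
Definition coef (U : seq (Kq * V)) (g : V) : Kq := \sum_(u <- U | u.2 == g) u.1.
Definition okA (U : seq (Kq * V)) := forall u, u \in U -> inA u.1.
Definition good (P : V -> Prop) (U : seq (Kq * V)) :=
  forall u, u \in U -> inA u.1 /\ P u.2.

Lemma good_okA P U : good P U -> okA U.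
Proof. by move=> h u /h []. Qed.

Lemma ev_regroup U : ev U = \sum_(g <- undup (map snd U)) coef U g *: M g.
Proof.
rewrite /ev (@sum_part _ _ _ U snd (undup (map snd U))) ?undup_uniq //; last first.
  by move=> n; rewrite mem_undup.
apply: eq_bigr => g _; rewrite /coef scaler_suml; apply: eq_bigr => u /eqP -> //.
Qed.

Lemma coef_out U g : g \notin map snd U -> coef U g = 0.
Proof.
move=> hg; rewrite /coef big_seq_cond big1 // => u /andP[hu /eqP e].
by case/negP: hg; rewrite -e; apply: map_f.
Qed.

Lemma ev_indep U : okA U -> ev U = 0 -> forall g, coef U g = 0.
Proof.
move=> hA; rewrite ev_regroup => h0 g.
case hg: (g \in map snd U); last by rewrite coef_out // hg.
apply: (Mind (undup_uniq _) _ h0); last by rewrite mem_undup.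
by move=> f; apply: inA_sum => u hu; apply: hA.
Qed.

Lemma ev_coef0 U : (forall g, coef U g = 0) -> ev U = 0.
Proof. by move=> h; rewrite ev_regroup big1 // => g _; rewrite h scale0r. Qed.

Definition negC (U : seq (Kq * V)) := [seq (- u.1, u.2) | u <- U].
Definition scaleC a (U : seq (Kq * V)) := [seq (a * u.1, u.2) | u <- U].
Definition mulC (U W : seq (Kq * V)) :=
  [seq (u.1 * w.1 * qh ^ lam u.2 w.2, u.2 + w.2) | u <- U, w <- W].

Lemma ev_cat U W : ev (U ++ W) = ev U + ev W.
Proof. by rewrite /ev big_cat. Qed.
Lemma coef_cat U W g : coef (U ++ W) g = coef U g + coef W g.
Proof. by rewrite /coef big_cat. Qed.
Lemma ev_nil : ev [::] = 0.
Proof. by rewrite /ev big_nil. Qed.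
Lemma ev_negC U : ev (negC U) = - ev U.
Proof. by rewrite /ev big_map -sumrN; apply: eq_bigr => u _; rewrite scaleNr. Qed.
Lemma coef_negC U g : coef (negC U) g = - coef U g.
Proof. by rewrite /coef big_map -sumrN. Qed.
Lemma ev_scaleC a U : ev (scaleC a U) = a *: ev U.
Proof. by rewrite /ev big_map scaler_sumr; apply: eq_bigr => u _; rewrite scalerA. Qed.
Lemma coef_scaleC a U g : coef (scaleC a U) g = a * coef U g.
Proof. by rewrite /coef big_map mulr_sumr. Qed.
Lemma ev_mulC U W : ev U * ev W = ev (mulC U W).
Proof.
rewrite /ev /mulC big_allpairs_dep mulr_suml; apply: eq_bigr => u _.
rewrite mulr_sumr; apply: eq_bigr => w _ /=.
by rewrite -scalerAl -scalerAr MM !scalerA; congr (_ *: _); rewrite mulrC (mulrC u.1).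
Qed.

Lemma okA_cat U W : okA U -> okA W -> okA (U ++ W).
Proof. by move=> hU hW u; rewrite mem_cat => /orP[/hU|/hW]. Qed.
Lemma okA_negC U : okA U -> okA (negC U).
Proof. by move=> hU u /mapP[v /hU hv ->]; apply: inAN. Qed.

Lemma ev_eq U W : okA U -> okA W -> ev U = ev W -> forall g, coef U g = coef W g.
Proof.
move=> hU hW e g.
have h0 : ev (U ++ negC W) = 0 by rewrite ev_cat ev_negC e subrr.
have := ev_indep (okA_cat hU (okA_negC hW)) h0 g.
by rewrite coef_cat coef_negC => /eqP; rewrite subr_eq0 => /eqP.
Qed.

Lemma ev_coef_eq U W : (forall g, coef U g = coef W g) -> ev U = ev W.
Proof.
move=> h; apply/eqP; rewrite -subr_eq0 -ev_negC -ev_cat; apply/eqP.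
by apply: ev_coef0 => g; rewrite coef_cat coef_negC h subrr.
Qed.

Lemma good_cat P U W : good P U -> good P W -> good P (U ++ W).
Proof. by move=> hU hW u; rewrite mem_cat => /orP[/hU|/hW]. Qed.
Lemma good_nil P : good P [::].
Proof. by []. Qed.
Lemma good_scaleC P a U : inA a -> good P U -> good P (scaleC a U).
Proof. by move=> ha hU u /mapP[v /hU [h1 h2] ->]; split=> //; apply: inAM. Qed.
Lemma good_mulC (P Q R : V -> Prop) U W :
  (forall f g, P f -> Q g -> R (f + g)) ->
  good P U -> good Q W -> good R (mulC U W).
Proof.
move=> hPQ hU hW u /allpairsP[[v w] [/hU [hv1 hv2] /hW [hw1 hw2] ->]] /=.
split; last by apply: hPQ.
by apply: inAM; [apply: inAM|apply: inA_qh].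
Qed.
Lemma good_sub (P Q : V -> Prop) U : (forall f, P f -> Q f) -> good P U -> good Q U.
Proof. by move=> hPQ hU u /hU [h1 h2]; split=> //; apply: hPQ. Qed.

Lemma coef_fun U g (phi : V -> Kq) :
  \sum_(u <- U | u.2 == g) u.1 * phi u.2 = coef U g * phi g.
Proof. by rewrite /coef mulr_suml; apply: eq_bigr => u /eqP ->. Qed.

Variables (S : {set 'I_N}) (k : 'I_N) (bb : V) (d : int).
Hypothesis kS : k \in S.
Hypothesis d_gt0 : 0 < d.
Hypothesis lam_bb : forall f, lam bb f = d * f 0 k.

Local Notation e := (evec k).
Definition gg : V := posp bb.
Definition hh : V := - negp bb.
Definition x : F := M e.
Definition x' : F := M (- e + posp bb) + M (- e - negp bb).

Definition cone (f : V) := forall i, i \notin S -> 0 <= f 0 i.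
Definition cone0 (f : V) := f 0 k = 0 /\ cone f.

Lemma evecE (j i : 'I_N) : evec j 0 i = (j == i)%:R.
Proof. by rewrite /evec mxE eqxx /= eq_sym. Qed.

Lemma bb_k : bb 0 k = 0.
Proof.
have := lam_bb bb; rewrite lam_self => /esym/eqP.
by rewrite mulf_eq0 gt_eqF //= => /eqP.
Qed.

Lemma gg_hh : gg - hh = bb.
Proof.
apply/rowP=> j; rewrite /gg /hh opprK !mxE.
by case: (ltP (bb 0 j) 0) => h; rewrite ?add0r ?addr0.
Qed.

Lemma gg_cone0 : cone0 gg.
Proof.
split; first by rewrite /gg mxE bb_k maxxx.
by move=> i _; rewrite /gg mxE le_max lexx orbT.
Qed.
Lemma hh_cone0 : cone0 hh.
Proof.
split; first by rewrite /hh !mxE bb_k minxx oppr0.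
by move=> i _; rewrite /hh !mxE oppr_ge0 ge_min lexx orbT.
Qed.

Lemma gg_neq_hh : exists i0, gg 0 i0 != hh 0 i0.
Proof.
case: (boolP [exists i, gg 0 i != hh 0 i]) => [/existsP[i hi]|/existsPn h].
  by exists i.
have e0 : bb = 0.
  apply/rowP => j; rewrite -gg_hh [LHS]mxE [(- hh) 0 j]mxE.
  by rewrite (eqP (negbNE (h j))) subrr mxE.
have := lam_bb e; rewrite e0 /bform !mul0mx mxE evecE eqxx mulr1 => /esym/eqP.
by rewrite gt_eqF.
Qed.

Lemma lam_gg_hh (f : V) : f 0 k = 0 -> lam gg f = lam hh f.
Proof.
move=> fk; apply/eqP; rewrite -subr_eq0 -lamNl -lamDl gg_hh lam_bb fk mulr0 //.
Qed.

Lemma cone_add (f g : V) : cone f -> cone g -> cone (f + g).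
Proof. by move=> hf hg i hi; rewrite mxE addr_ge0 ?hf ?hg. Qed.
Lemma cone0_add (f g : V) : cone0 f -> cone0 g -> cone0 (f + g).
Proof. by move=> [f1 f2] [g1 g2]; split; [rewrite mxE f1 g1 addr0|apply: cone_add]. Qed.
Lemma cone0_0 : cone0 0.
Proof. by split; [rewrite mxE|move=> i _; rewrite mxE]. Qed.

Hypothesis divF : division_ring F.

Lemma inv_comm (w a : F) (c c' : Kq) : w \is a GRing.unit -> c' * c = 1 ->
  w * a = c *: (a * w) -> w^-1 * a = c' *: (a * w^-1).
Proof.
move=> wu cc e1.
have e2 : a * w = c' *: (w * a) by rewrite e1 scalerA cc scale1r.
rewrite -[w^-1 * a](mulrK wu) -(mulrA _ a) e2 -scalerAr -scalerAl mulrA mulVr //.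
by rewrite mul1r.
Qed.

Lemma qhK' (z : int) : qh ^ (- z) * qh ^ z = 1.
Proof. by rewrite mulrC qhK. Qed.

Lemma pow_comm (w : F) (f : V) (t : int) : w \is a GRing.unit ->
  w * M f = qh ^ t *: (M f * w) ->
  forall n : int, w ^ n * M f = qh ^ (n * t) *: (M f * w ^ n).
Proof.
move=> wu e1.
have hp : forall n : nat, w ^+ n * M f = qh ^ (n%:Z * t) *: (M f * w ^+ n).
  elim=> [|n IH]; first by rewrite expr0 mul0r expr0z scale1r mul1r mulr1.
  rewrite [in LHS]exprS -mulrA IH -scalerAr mulrA e1 -scalerAl scalerA -qhD.
  rewrite -mulrA -exprS; congr (qh ^ _ *: _); lia.
case=> n; first exact: hp.
rewrite /exprz.
apply: (inv_comm (unitrX _ wu) _ (hp n.+1)).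
rewrite -qhD NegzE -[X in _ = X](expr0z qh); congr (qh ^ _); lia.
Qed.

Definition qc (w : F) :=
  forall f : V, f 0 k = 0 -> exists t : int, w * M f = qh ^ t *: (M f * w).

Lemma qc_M g : qc (M g).
Proof. by move=> f _; exists (2 * lam g f); rewrite Mcomm. Qed.
Lemma qc_1 : qc 1.
Proof. by move=> f _; exists 0; rewrite expr0z scale1r mul1r mulr1. Qed.
Lemma qc_mul w1 w2 : qc w1 -> qc w2 -> qc (w1 * w2).
Proof.
move=> h1 h2 f fk; case: (h1 f fk) => t1 e1; case: (h2 f fk) => t2 e2.
exists (t2 + t1).
rewrite -mulrA e2 -scalerAr [in LHS]mulrA e1 -scalerAl scalerA -qhD mulrA //.
Qed.
Lemma qc_exp w n : qc w -> qc (w ^+ n).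
Proof.
move=> h; elim: n => [|n IH]; first by rewrite expr0; exact: qc_1.
by rewrite exprS; apply: qc_mul.
Qed.
Lemma qc_inv w : w \is a GRing.unit -> qc w -> qc w^-1.
Proof.
move=> wu h f fk; case: (h f fk) => t e1; exists (- t).
exact: (inv_comm wu (qhK' t) e1).
Qed.

Lemma x'E : x' = M (- e + gg) + M (- e + hh).
Proof. by rewrite /x' /hh. Qed.

Definition tp (f : V) : int := 2 * lam (- e + gg) f.

Lemma x'_comm (f : V) : f 0 k = 0 -> x' * M f = qh ^ tp f *: (M f * x').
Proof.
move=> fk; rewrite x'E mulrDl mulrDr (Mcomm (- e + gg)) (Mcomm (- e + hh)) scalerDr /tp.
by rewrite [lam (- e + hh) f]lamDl [lam (- e + gg) f]lamDl lam_gg_hh.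
Qed.
Lemma qc_x' : qc x'.
Proof. by move=> f fk; exists (tp f); apply: x'_comm. Qed.
Lemma qc_x : qc x.
Proof. exact: qc_M. Qed.

Lemma ev2 (a b : Kq) (f g : V) : ev [:: (a, f); (b, g)] = a *: M f + b *: M g.
Proof. by rewrite /ev !big_cons big_nil addr0. Qed.
Lemma ev1 (a : Kq) (f : V) : ev [:: (a, f)] = a *: M f.
Proof. by rewrite /ev big_cons big_nil addr0. Qed.

Lemma x'_ev : x' = ev [:: (1, - e + gg); (1, - e + hh)].
Proof. by rewrite ev2 !scale1r x'E. Qed.

Lemma gg_hh_neq : gg != hh.
Proof.
case: gg_neq_hh => i0 hi; apply/eqP => eq; move: hi; by rewrite eq eqxx.
Qed.

Lemma x'_neq0 : x' != 0.
Proof.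
apply/eqP => h0.
have hA : okA [:: (1, - e + gg); (1, - e + hh)].
  by move=> u; rewrite !inE => /orP[] /eqP -> /=; apply: inA1.
have := ev_indep hA (etrans (esym x'_ev) h0) (- e + gg).
rewrite /coef !big_cons big_nil /= eqxx (inj_eq (addrI _)) eq_sym.
rewrite (negbTE gg_hh_neq) addr0 => /eqP; by rewrite oner_eq0.
Qed.

Lemma x'_unit : x' \is a GRing.unit.
Proof. exact: divF x'_neq0. Qed.
Lemma x_unit : x \is a GRing.unit.
Proof. exact: M_unit. Qed.

Lemma Mpow (g : V) (z : int) : M (z *: g) = M g ^ z.
Proof.
have hp : forall n : nat, M (n%:Z *: g) = M g ^+ n.
  elim=> [|n IH]; first by rewrite scale0r M0 expr0.
  have -> : (n.+1)%:Z *: g = n%:Z *: g + g.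
    by rewrite (_ : (n.+1)%:Z = n%:Z + 1) ?scalerDl ?scale1r //; lia.
  by rewrite exprSr -IH MM lamZl lam_self mulr0 expr0z scale1r.
case: z => n; first exact: hp.
by rewrite NegzE scaleNr -M_V hp.
Qed.

Lemma xpow (n : nat) : x ^+ n = M (n%:Z *: e).
Proof. by rewrite Mpow. Qed.
Lemma xpowV (n : nat) : (x ^+ n)^-1 = M (- (n%:Z *: e)).
Proof. by rewrite xpow M_V. Qed.

Definition Tsp (z : F) := exists U, good cone U /\ z = ev U.
Definition Yel (z : F) := exists U, good cone0 U /\ z = ev U.

Section TgeLemmas.
Variable gen : 'I_N -> F.
Local Notation T := (Tge gen S).

Lemma Tge1 : T 1.
Proof. by have := tg_scal gen S inA1; rewrite scale1r. Qed.
Lemma Tge0 : T 0.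
Proof. by have := tg_scal gen S inA0; rewrite scale0r. Qed.
Lemma Tge_scale a u : inA a -> T u -> T (a *: u).
Proof. by move=> ha hu; rewrite -[u]mul1r scalerAl; apply: tg_mul => //; apply: tg_scal. Qed.
Lemma Tge_pow u n : T u -> T (u ^+ n).
Proof.
move=> hu; elim: n => [|n IH]; first by rewrite expr0; exact: Tge1.
by rewrite exprS; apply: tg_mul.
Qed.
Lemma Tge_sum (I : eqType) (r : seq I) (G : I -> F) :
  (forall i, i \in r -> T (G i)) -> T (\sum_(i <- r) G i).
Proof.
elim: r => [|i r IH] h; first by rewrite big_nil; exact: Tge0.
rewrite big_cons; apply: tg_add; first by apply: h; rewrite inE eqxx.
by apply: IH => j hj; apply: h; rewrite inE hj orbT.
Qed.
Lemma Tge_powz i (z : int) : (0 <= z) || (i \in S) -> T (gen i ^ z).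
Proof.
case: z => n h; first by apply: Tge_pow; apply: tg_gen.
rewrite /exprz -exprVn; apply: Tge_pow; apply: tg_inv.
by move: h; rewrite NegzE oppr_ge0.
Qed.

Lemma Msplit (a b : V) : M (a + b) = qh ^ (- lam a b) *: (M a * M b).
Proof. by rewrite MM scalerA qhK' scale1r. Qed.

Lemma Tge_M (f : V) : (forall i, i != k -> gen i = M (evec i)) ->
  (f 0 k = 0 \/ gen k = M e) -> cone f -> T (M f).
Proof.
move=> hgen hk hc.
suff H : forall r, T (M (\sum_(j <- r) f 0 j *: delta_mx 0 j)).
  by rewrite {1}(row_sum_delta f); apply: H.
elim=> [|j r IH]; first by rewrite big_nil M0; exact: Tge1.
rewrite big_cons Msplit; apply: Tge_scale; first exact: inA_qh.
apply: tg_mul => //.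
case: (boolP (j == k)) => [/eqP ->|hj].
  case: hk => [-> | hk]; first by rewrite scale0r M0; exact: Tge1.
  rewrite Mpow -/(evec k) -hk; apply: Tge_powz.
  by rewrite kS orbT.
rewrite Mpow -/(evec j) -hgen //; apply: Tge_powz.
by case: (boolP (j \in S)) => hjS; rewrite ?orbT // hc.
Qed.
End TgeLemmas.

Lemma cone_evec i : cone (evec i).
Proof. by move=> j _; rewrite evecE ler0n. Qed.
Lemma cone_Nevec i : i \in S -> cone (- evec i).
Proof.
move=> hi j hj; rewrite mxE evecE; case: (eqVneq i j) => [eij|]; last by rewrite oppr0.
by move: hj; rewrite -eij hi.
Qed.

Lemma T_to_sp z : Tge (fun i => M (evec i)) S z -> Tsp z.
Proof.
elim=> [i|j hj|a ha|u v _ [U [gU ->]] _ [W [gW ->]]|u v _ [U [gU ->]] _ [W [gW ->]]].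
- exists [:: (1, evec i)]; split; last by rewrite ev1 scale1r.
  by move=> u; rewrite inE => /eqP -> /=; split; [exact: inA1|exact: cone_evec].
- exists [:: (1, - evec j)]; split; last by rewrite ev1 scale1r M_V.
  by move=> u; rewrite inE => /eqP -> /=; split; [exact: inA1|exact: cone_Nevec].
- exists [:: (a, 0)]; split; last by rewrite ev1 M0.
  by move=> u; rewrite inE => /eqP -> /=; split => // i _; rewrite mxE.
- by exists (U ++ W); split; [apply: good_cat|rewrite ev_cat].
- exists (mulC U W); split; last by rewrite ev_mulC.
  by apply: good_mulC gU gW => f g; apply: cone_add.
Qed.

Lemma sp_to_T z : Tsp z -> Tge (fun i => M (evec i)) S z.
Proof.
case=> U [gU ->]; apply: Tge_sum => u /gU [h1 h2].
apply: Tge_scale => //; apply: Tge_M => //; by right.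
Qed.

Definition evw (W : seq ((Kq * V) * int)) : F :=
  \sum_(t <- W) t.1.1 *: (M t.1.2 * x' ^ t.2).
Definition goodW (W : seq ((Kq * V) * int)) :=
  forall t, t \in W -> inA t.1.1 /\ cone0 t.1.2.
Definition Tsp' (z : F) := exists W, goodW W /\ z = evw W.
Definition mulW (W1 W2 : seq ((Kq * V) * int)) :=
  [seq ((t1.1.1 * t2.1.1 * qh ^ (t1.2 * tp t2.1.2 + lam t1.1.2 t2.1.2),
         t1.1.2 + t2.1.2), t1.2 + t2.2) | t1 <- W1, t2 <- W2].

Lemma x'pow_comm (f : V) n : f 0 k = 0 ->
  x' ^ n * M f = qh ^ (n * tp f) *: (M f * x' ^ n).
Proof. by move=> fk; apply: (pow_comm x'_unit (x'_comm fk)). Qed.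

Lemma mono_mul (a1 a2 : Kq) (f1 f2 : V) (n1 n2 : int) : f2 0 k = 0 ->
  (a1 *: (M f1 * x' ^ n1)) * (a2 *: (M f2 * x' ^ n2)) =
  (a1 * a2 * qh ^ (n1 * tp f2 + lam f1 f2)) *: (M (f1 + f2) * x' ^ (n1 + n2)).
Proof.
move=> fk.
rewrite -scalerAl -scalerAr scalerA.
rewrite (mulrA (M f1 * _)) -(mulrA (M f1)) x'pow_comm // -scalerAr -scalerAl.
rewrite (mulrA (M f1)) MM -scalerAl -scalerAl -mulrA -exprzDr ?x'_unit //.
by rewrite !scalerA qhD; congr (_ *: _); rewrite -!mulrA; congr (_ * _); rewrite mulrC -mulrA.
Qed.

Lemma evw_mul W1 W2 : goodW W2 -> evw W1 * evw W2 = evw (mulW W1 W2).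
Proof.
move=> g2; rewrite /evw /mulW big_allpairs_dep mulr_suml; apply: eq_bigr => t1 _.
rewrite big_seq mulr_sumr [RHS]big_seq; apply: eq_bigr => t2 /g2 [_ [fk _]] /=.
exact: mono_mul.
Qed.

Lemma evw_cat W1 W2 : evw (W1 ++ W2) = evw W1 + evw W2.
Proof. by rewrite /evw big_cat. Qed.
Lemma evw1 a f n : evw [:: ((a, f), n)] = a *: (M f * x' ^ n).
Proof. by rewrite /evw big_cons big_nil addr0. Qed.

Lemma cone0_evec i : i != k -> cone0 (evec i).
Proof. by move=> hi; split; [rewrite evecE (negbTE hi)|exact: cone_evec]. Qed.
Lemma cone0_Nevec i : i != k -> i \in S -> cone0 (- evec i).
Proof.
by move=> hi hS; split; [rewrite mxE evecE (negbTE hi) oppr0|exact: cone_Nevec].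
Qed.

Lemma goodW1 a f n : inA a -> cone0 f -> goodW [:: ((a, f), n)].
Proof. by move=> ha hf t; rewrite inE => /eqP ->. Qed.
Lemma goodW_cat W1 W2 : goodW W1 -> goodW W2 -> goodW (W1 ++ W2).
Proof. by move=> h1 h2 t; rewrite mem_cat => /orP[/h1|/h2]. Qed.
Lemma goodW_mul W1 W2 : goodW W1 -> goodW W2 -> goodW (mulW W1 W2).
Proof.
move=> h1 h2 t /allpairsP[[t1 t2] [/h1 [a1 c1] /h2 [a2 c2] ->]] /=.
split; last exact: cone0_add.
by apply: inAM; [apply: inAM|apply: inA_qh].
Qed.

Lemma Tsp'_add u v : Tsp' u -> Tsp' v -> Tsp' (u + v).
Proof. by move=> [W1 [g1 ->]] [W2 [g2 ->]]; exists (W1 ++ W2); rewrite evw_cat; split => //; apply: goodW_cat. Qed.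
Lemma Tsp'_mul u v : Tsp' u -> Tsp' v -> Tsp' (u * v).
Proof. by move=> [W1 [g1 ->]] [W2 [g2 ->]]; exists (mulW W1 W2); rewrite evw_mul //; split => //; apply: goodW_mul. Qed.
Lemma Tsp'_0 : Tsp' 0.
Proof. by exists [::]; split => //; rewrite /evw big_nil. Qed.
Lemma Tsp'_sum (I : eqType) (r : seq I) (G : I -> F) :
  (forall i, i \in r -> Tsp' (G i)) -> Tsp' (\sum_(i <- r) G i).
Proof.
elim: r => [|i r IH] h; first by rewrite big_nil; exact: Tsp'_0.
rewrite big_cons; apply: Tsp'_add; first by apply: h; rewrite inE eqxx.
by apply: IH => j hj; apply: h; rewrite inE hj orbT.
Qed.

Section Tge'.
Variable gen : 'I_N -> F.
Hypothesis genk : gen k = x'.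
Hypothesis geni : forall i, i != k -> gen i = M (evec i).

Lemma T'_to_sp z : Tge gen S z -> Tsp' z.
Proof.
elim=> [i|j hj|a ha|u v _ hu _ hv|u v _ hu _ hv].
- case: (eqVneq i k) => [->|hi].
    exists [:: ((1, 0), 1)]; split; first by apply: goodW1; [exact: inA1|exact: cone0_0].
    by rewrite evw1 scale1r M0 mul1r expr1z genk.
  exists [:: ((1, evec i), 0)]; split; first by apply: goodW1; [exact: inA1|exact: cone0_evec].
  by rewrite evw1 scale1r expr0z mulr1 geni.
- case: (eqVneq j k) => [->|hi].
    exists [:: ((1, 0), -1)]; split; first by apply: goodW1; [exact: inA1|exact: cone0_0].
    by rewrite evw1 scale1r M0 mul1r genk -exprz_inv expr1z.
  exists [:: ((1, - evec j), 0)]; split; first by apply: goodW1; [exact: inA1|exact: cone0_Nevec].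
  by rewrite evw1 scale1r expr0z mulr1 geni // M_V.
- exists [:: ((a, 0), 0)]; split; first by apply: goodW1 => //; exact: cone0_0.
  by rewrite evw1 M0 mul1r expr0z.
- exact: Tsp'_add.
- exact: Tsp'_mul.
Qed.

Lemma sp_to_T' z : Tsp' z -> Tge gen S z.
Proof.
case=> W [gW ->]; apply: Tge_sum => t /gW [h1 [h2 h3]].
apply: Tge_scale => //; apply: tg_mul.
  by apply: Tge_M => //; left.
by rewrite -genk; apply: Tge_powz; rewrite kS orbT.
Qed.
End Tge'.

Definition Hom (dg : int) (z : F) :=
  exists U, good (fun f => cone f /\ f 0 k = dg) U /\ z = ev U.
Definition NoD (dg : int) (z : F) :=
  exists U, good (fun f => f 0 k != dg) U /\ z = ev U.

Lemma Hom_0 dg : Hom dg 0.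
Proof. by exists [::]; rewrite ev_nil. Qed.
Lemma Hom_add dg u v : Hom dg u -> Hom dg v -> Hom dg (u + v).
Proof. by move=> [U [gU ->]] [W [gW ->]]; exists (U ++ W); rewrite ev_cat; split => //; apply: good_cat. Qed.
Lemma Hom_scale dg a u : inA a -> Hom dg u -> Hom dg (a *: u).
Proof. by move=> ha [U [gU ->]]; exists (scaleC a U); rewrite ev_scaleC; split => //; apply: good_scaleC. Qed.
Lemma Hom_mul d1 d2 dg u v : Hom d1 u -> Hom d2 v -> dg = d1 + d2 -> Hom dg (u * v).
Proof.
move=> [U [gU ->]] [W [gW ->]] ->; exists (mulC U W); rewrite ev_mulC; split => //.
apply: good_mulC gU gW => f g [c1 d1'] [c2 d2']; split; first exact: cone_add.
by rewrite mxE d1' d2'.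
Qed.
Lemma Hom_M (f : V) : cone f -> Hom (f 0 k) (M f).
Proof.
move=> hf; exists [:: (1, f)]; rewrite ev1 scale1r; split => //.
by move=> u; rewrite inE => /eqP -> /=; split; [exact: inA1|split].
Qed.
Lemma Yel_Hom0 u : Yel u -> Hom 0 u.
Proof. by move=> [U [gU ->]]; exists U; split => // w /gU [h1 [h2 h3]]. Qed.
Lemma Hom0_Yel u : Hom 0 u -> Yel u.
Proof. by move=> [U [gU ->]]; exists U; split => // w /gU [h1 [h2 h3]]. Qed.

Lemma NoD_0 dg : NoD dg 0.
Proof. by exists [::]; rewrite ev_nil. Qed.
Lemma NoD_add dg u v : NoD dg u -> NoD dg v -> NoD dg (u + v).
Proof. by move=> [U [gU ->]] [W [gW ->]]; exists (U ++ W); rewrite ev_cat; split => //; apply: good_cat. Qed.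
Lemma NoD_scale dg a u : inA a -> NoD dg u -> NoD dg (a *: u).
Proof. by move=> ha [U [gU ->]]; exists (scaleC a U); rewrite ev_scaleC; split => //; apply: good_scaleC. Qed.
Lemma Hom_NoD d' dg u : Hom d' u -> d' != dg -> NoD dg u.
Proof.
move=> [U [gU ->]] hd; exists U; split => // w /gU [h1 [h2 h3]]; split => //.
by rewrite h3.
Qed.
Lemma NoD_mul0 dg u v : Hom 0 u -> NoD dg v -> NoD dg (u * v).
Proof.
move=> [U [gU ->]] [W [gW ->]]; exists (mulC U W); rewrite ev_mulC; split => //.
by apply: good_mulC gU gW => f g [c1 d1'] d2'; rewrite mxE d1' add0r.
Qed.
Lemma NoD_sum dg (I : eqType) (r : seq I) (P : pred I) (G : I -> F) :
  (forall i, i \in r -> P i -> NoD dg (G i)) -> NoD dg (\sum_(i <- r | P i) G i).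
Proof.
elim: r => [|i r IH] h; first by rewrite big_nil; exact: NoD_0.
rewrite big_cons; case: ifP => hP.
  apply: NoD_add; first by apply: h => //; rewrite inE eqxx.
  by apply: IH => j hj; apply: h; rewrite inE hj orbT.
by apply: IH => j hj; apply: h; rewrite inE hj orbT.
Qed.

Lemma good_notin (P : V -> Prop) U g : good P U -> ~ P g -> g \notin map snd U.
Proof. by move=> gU hg; apply/mapP => [[u /gU [_ hu] eq]]; apply: hg; rewrite eq. Qed.

Lemma HU dg a1 a2 b1 b2 : Hom dg a1 -> NoD dg a2 -> Hom dg b1 -> NoD dg b2 ->
  a1 + a2 = b1 + b2 -> a1 = b1.
Proof.
move=> [A1 [g1 ->]] [A2 [g2 ->]] [B1 [g3 ->]] [B2 [g4 ->]].
rewrite -!ev_cat => E.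
have hc := ev_eq (okA_cat (good_okA g1) (good_okA g2))
                 (okA_cat (good_okA g3) (good_okA g4)) E.
apply: ev_coef_eq => g; have := hc g; rewrite !coef_cat.
case: (eqVneq (g 0 k) dg) => hg.
  rewrite (coef_out (good_notin g2 _)) ?(coef_out (good_notin g4 _)) ?addr0 //.
    by rewrite hg eqxx.
  by rewrite hg eqxx.
rewrite (coef_out (good_notin g1 _)) ?(coef_out (good_notin g3 _)) //.
  by move=> [_ hh']; move: hg; rewrite hh' eqxx.
by move=> [_ hh']; move: hg; rewrite hh' eqxx.
Qed.

Lemma Tsp_split dg z : Tsp z -> exists z1 z2, Hom dg z1 /\ NoD dg z2 /\ z = z1 + z2.
Proof.
move=> [U [gU ->]].
exists (ev [seq u <- U | (u : Kq * V).2 0 k == dg]), (ev [seq u <- U | (u : Kq * V).2 0 k != dg]).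
split; last split.
- exists [seq u <- U | (u : Kq * V).2 0 k == dg]; split => // u; rewrite mem_filter => /andP[/eqP h1 /gU [h2 h3]].
  by split.
- exists [seq u <- U | (u : Kq * V).2 0 k != dg]; split => // u; rewrite mem_filter => /andP[h1 /gU [h2 h3]].
  by split.
by rewrite /ev !big_filter (bigID (fun u : Kq * V => u.2 0 k == dg)).
Qed.

Lemma Tsp_group z : Tsp z ->
  exists ds : seq int, exists G : int -> F, (forall dg, Hom dg (G dg)) /\ uniq ds /\ z = \sum_(dg <- ds) G dg.
Proof.
move=> [U [gU ->]].
exists (undup (map (fun u : Kq * V => u.2 0 k) U)), (fun dg => ev [seq u <- U | (u : Kq * V).2 0 k == dg]).
split.
  move=> dg; exists [seq u <- U | (u : Kq * V).2 0 k == dg]; split => // u.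
  by rewrite mem_filter => /andP[/eqP h1 /gU [h2 h3]].
split; first exact: undup_uniq.
rewrite /ev (@sum_part _ _ _ U (fun u : Kq * V => u.2 0 k) (undup (map (fun u : Kq * V => u.2 0 k) U))) ?undup_uniq //.
  by apply: eq_bigr => dg _; rewrite big_filter.
by move=> n; rewrite mem_undup.
Qed.

Lemma scale_eE (dg : int) i : (dg *: e) 0 i = dg * (k == i)%:R.
Proof. by rewrite [LHS]mxE evecE. Qed.
Lemma shiftE (f : V) (dg : int) i : (f - dg *: e) 0 i = f 0 i - dg * (k == i)%:R.
Proof. by rewrite [LHS]mxE [((- _ : V)) 0 i]mxE scale_eE. Qed.

Lemma Hom_shift dg z : Hom dg z -> exists c, Yel c /\ z = c * M (dg *: e).
Proof.
move=> [U [gU ->]].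
exists (ev [seq (u.1 * qh ^ (- lam (u.2 - dg *: e) (dg *: e)), u.2 - dg *: e) | u <- U]).
split.
  eexists; split; last reflexivity.
  move=> w /mapP[u /gU [h1 [h2 h3]] ->] /=; split; first by apply: inAM => //; exact: inA_qh.
  split; first by rewrite shiftE h3 eqxx mulr1 subrr.
  move=> i hi; rewrite shiftE.
  have -> : (k == i) = false by apply/eqP => ki; move: hi; rewrite -ki kS.
  by rewrite mulr0 subr0; apply: h2.
rewrite /ev big_map mulr_suml; apply: eq_bigr => u _ /=.
by rewrite -scalerAl MM scalerA -mulrA -qhD addNr expr0z mulr1 subrK.
Qed.

Lemma cone_e (dg : int) : cone (dg *: e).
Proof.
move=> i hi; rewrite scale_eE.
have -> : (k == i) = false by apply/eqP => ki; move: hi; rewrite -ki kS.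
by rewrite mulr0.
Qed.
Lemma e_k (dg : int) : (dg *: e) 0 k = dg.
Proof. by rewrite scale_eE eqxx mulr1. Qed.

Lemma Hom_unshift dg c : Yel c -> Hom dg (c * M (dg *: e)).
Proof.
move=> hc; apply: (Hom_mul (Yel_Hom0 hc) (Hom_M (cone_e dg))).
by rewrite e_k add0r.
Qed.

Lemma coef_mulC2 U (a1 a2 : Kq) (f0 : V) :
  coef (mulC U [:: (a1, gg); (a2, hh)]) (f0 + gg) =
  coef U f0 * (a1 * qh ^ lam f0 gg) +
  coef U (f0 + gg - hh) * (a2 * qh ^ lam (f0 + gg - hh) hh).
Proof.
rewrite /coef /mulC big_mkcond big_allpairs_dep /=.
under eq_bigr => u _ do rewrite !big_cons big_nil /= addr0.
rewrite big_split /=; congr (_ + _).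
  rewrite -big_mkcond /= -(coef_fun U f0 (fun v => a1 * qh ^ lam v gg)).
  apply: eq_big => [u|u _]; first by rewrite (inj_eq (addIr gg)).
  by rewrite mulrA.
rewrite -big_mkcond /= -(coef_fun U _ (fun v => a2 * qh ^ lam v hh)).
apply: eq_big => [u|u _]; last by rewrite mulrA.
by rewrite eq_sym -subr_eq eq_sym.
Qed.

Lemma dvdA0 p : dvdA p 0.
Proof. by exists 0; split; [exact: inA0|rewrite mulr0]. Qed.

Lemma alg_step (K : comRingType) (C0 C1 A A' B D p c1 : K) :
  A * A' = 1 -> C0 * A + C1 * B = p * D -> C1 = p * c1 ->
  C0 = p * ((D - c1 * B) * A').
Proof.
move=> hA h1 hC1.
have h : C0 * A = p * D - C1 * B by rewrite -h1 addrK.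
by rewrite -[C0]mulr1 -hA mulrA h hC1; ring.
Qed.

Lemma le_sum_mem (T : eqType) (r : seq T) (G : T -> int) t :
  (forall u, 0 <= G u) -> t \in r -> G t <= \sum_(u <- r) G u.
Proof.
move=> h0; elim: r => [|u r IH] //; rewrite inE big_cons => /orP[/eqP ->|ht].
  by rewrite lerDl sumr_ge0.
by apply: (le_trans (IH ht)); rewrite lerDr.
Qed.

Lemma TT_div (p : Kq) (a1 a2 : int) (Uc Ua : seq (Kq * V)) :
  inA p -> good cone0 Uc -> okA Ua ->
  ev Uc * (qh ^ a1 *: M gg + qh ^ a2 *: M hh) = p *: ev Ua ->
  forall f, dvdA p (coef Uc f).
Proof.
move=> hp gU hUa E.
have E' : ev (mulC Uc [:: (qh ^ a1, gg); (qh ^ a2, hh)]) = ev (scaleC p Ua).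
  by rewrite -ev_mulC ev2 ev_scaleC.
have okm : okA (mulC Uc [:: (qh ^ a1, gg); (qh ^ a2, hh)]).
  apply: good_okA; apply: (@good_mulC cone0 (fun _ => True) (fun _ => True)) => //.
  by move=> w; rewrite !inE => /orP[] /eqP -> /=; split => //; exact: inA_qh.
have oks : okA (scaleC p Ua) by move=> w /mapP[u /hUa hu ->]; apply: inAM.
have hc := ev_eq okm oks E'.
case: gg_neq_hh => i0 hi0.
pose dl := gg 0 i0 - hh 0 i0.
have dl0 : 0 < dl * dl by rewrite lt0r mulf_eq0 orbb subr_eq0 hi0 /= sqr_ge0.
pose phi := fun v : V => v 0 i0 * dl.
pose Mx := \sum_(u <- Uc) `|phi u.2|.
have hMx : forall f, f \in map snd Uc -> phi f <= Mx.
  move=> f /mapP[u hu ->]; apply: (le_trans (ler_norm _)).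
  by apply: (@le_sum_mem _ Uc (fun u => `|phi u.2|)) => // w; exact: normr_ge0.
have hphi : forall f, phi (f + gg - hh) = phi f + dl * dl.
  by move=> f; rewrite /phi /dl !mxE; ring.
have key : forall n : nat, forall f, Mx - phi f < n%:Z -> dvdA p (coef Uc f).
  elim=> [|n IH] f hf.
    rewrite coef_out; first exact: dvdA0.
    by apply/negP => /hMx h; move: hf; rewrite subr_lt0 ltNge h.
  have h1 : Mx - phi (f + gg - hh) < n%:Z by rewrite hphi; lia.
  case: (IH _ h1) => c1 [hc1 ec1].
  have := hc (f + gg); rewrite coef_mulC2 coef_scaleC -!qhD => eq.
  exists ((coef Ua (f + gg) - c1 * qh ^ (a2 + lam (f + gg - hh) hh)) * qh ^ (- (a1 + lam f gg))).
  split; last exact: (alg_step (qhK _) eq ec1).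
  apply: inAM; last exact: inA_qh.
  apply: inAB; last by apply: inAM => //; exact: inA_qh.
  by apply: inA_sum => u hu; apply: hUa.
move=> f; apply: (key (`|Mx - phi f|).+1).
have := ler_norm (Mx - phi f); rewrite -abszE; lia.
Qed.

Lemma collect (p : Kq) U : good cone0 U -> (forall f, dvdA p (coef U f)) ->
  exists W, good cone0 W /\ ev U = p *: ev W.
Proof.
move=> gU hd; rewrite ev_regroup.
suff H : forall s, (forall g, g \in s -> cone0 g) ->
    exists W, good cone0 W /\ \sum_(g <- s) coef U g *: M g = p *: ev W.
  apply: H => g; rewrite mem_undup => /mapP[u /gU [_ hu] ->] //.
elim=> [|g s IH] hs.
  by exists [::]; rewrite big_nil ev_nil scaler0.
case: IH => [h hh'|W [gW eW]]; first by apply: hs; rewrite inE hh' orbT.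
case: (hd g) => c [hc ec].
exists ((c, g) :: W); split.
  move=> u; rewrite inE => /orP[/eqP -> /=|/gW //]; split => //.
  by apply: hs; rewrite inE eqxx.
by rewrite big_cons eW /ev big_cons /= scalerDr scalerA ec.
Qed.

Definition TTe (E : F) := exists a1 a2 : int, E = qh ^ a1 *: M gg + qh ^ a2 *: M hh.

Lemma TT_step (p : Kq) a c E : inA p -> Yel a -> Yel c -> TTe E ->
  a * E = p *: c -> exists v, Yel v /\ a = p *: v.
Proof.
move=> hp [Uc [gc ->]] [Ua [ga ->]] [a1 [a2 ->]] eq.
have := TT_div hp gc (good_okA ga) eq => hd.
by case: (collect gc hd) => W [gW eW]; exists (ev W); split => //; exists W.
Qed.

Lemma Yel_mul u v : Yel u -> Yel v -> Yel (u * v).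
Proof.
move=> [U [gU ->]] [W [gW ->]]; exists (mulC U W); rewrite ev_mulC; split => //.
by apply: good_mulC gU gW => f g; apply: cone0_add.
Qed.
Lemma Yel_M f : cone0 f -> Yel (M f).
Proof.
move=> hf; exists [:: (1, f)]; rewrite ev1 scale1r; split => //.
by move=> u; rewrite inE => /eqP -> /=; split => //; exact: inA1.
Qed.
Lemma Yel_1 : Yel 1.
Proof. by rewrite -M0; apply: Yel_M; exact: cone0_0. Qed.
Lemma TTe_Yel E : TTe E -> Yel E.
Proof.
move=> [a1 [a2 ->]]; exists [:: (qh ^ a1, gg); (qh ^ a2, hh)]; rewrite ev2; split => //.
move=> u; rewrite !inE => /orP[] /eqP -> /=; split; try exact: inA_qh.
  exact: gg_cone0.
exact: hh_cone0.
Qed.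

Inductive TTp : F -> Prop :=
| TTp1 : TTp 1
| TTpS (Y0 E : F) : TTp Y0 -> TTe E -> TTp (Y0 * E).

Lemma TTp_Yel Z : TTp Z -> Yel Z.
Proof.
elim=> [|Y1 E _ IH hE]; first exact: Yel_1.
by apply: Yel_mul => //; apply: TTe_Yel.
Qed.

Lemma L2 (p : Kq) Z : inA p -> TTp Z -> forall a c, Yel a -> Yel c ->
  a * Z = p *: c -> exists v, Yel v /\ a = p *: v.
Proof.
move=> hp; elim=> [|Y1 E hZ IH hE] a c ha hc.
  by rewrite mulr1 => ->; exists c.
rewrite mulrA => eq.
have haZ : Yel (a * Y1) by apply: Yel_mul => //; apply: TTp_Yel.
case: (TT_step hp haZ hc hE eq) => v1 [hv1 e1].
exact: (IH a v1 ha hv1 e1).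
Qed.

Lemma twist Z a : qc Z -> Yel a -> exists a', Yel a' /\ Z * a = a' * Z.
Proof.
move=> hZ [U [gU ->]]; elim: U gU => [|u U IH] gU.
  by exists 0; split; [exists [::]; rewrite ev_nil|rewrite ev_nil mulr0 mul0r].
have gU' : good cone0 U by move=> w hw; apply: gU; rewrite inE hw orbT.
have [hu1 [hu2 hu3]] := gU u (mem_head _ _).
case: (IH gU') => a' [[U' [gU'' ->]] e1].
case: (hZ u.2 hu2) => t et.
exists (ev ((u.1 * qh ^ t, u.2) :: U')); split.
  eexists; split; last reflexivity.
  move=> w; rewrite inE => /orP[/eqP -> /=|/gU'' //]; split; last by split.
  by apply: inAM => //; exact: inA_qh.
rewrite /ev !big_cons /= -/(ev U) -/(ev U') mulrDr e1 mulrDl; congr (_ + _).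
by rewrite -scalerAr et scalerA -scalerAl.
Qed.

Lemma conjM w (f : V) : w \is a GRing.unit -> qc w -> f 0 k = 0 ->
  exists t, w^-1 * M f * w = qh ^ t *: M f.
Proof.
move=> wu hw fk; case: (qc_inv wu hw fk) => t et.
by exists t; rewrite et -scalerAl mulrVK.
Qed.

Lemma TTe_conj w E : w \is a GRing.unit -> qc w -> TTe E -> TTe (w^-1 * E * w).
Proof.
move=> wu hw [a1 [a2 ->]].
case: (conjM wu hw gg_cone0.1) => t1 e1.
case: (conjM wu hw hh_cone0.1) => t2 e2.
exists (a1 + t1), (a2 + t2).
rewrite mulrDr mulrDl -!scalerAr -!scalerAl e1 e2 !scalerA !qhD //.
Qed.

Lemma P_TTe : TTe (x * x').
Proof.
exists (lam e (- e + gg)), (lam e (- e + hh)).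
by rewrite x'E mulrDr /x !MM !addNKr.
Qed.
Lemma P''_TTe : TTe (x' * x).
Proof.
exists (lam (- e + gg) e), (lam (- e + hh) e).
by rewrite x'E mulrDl /x !MM (addrC (- e) gg) (addrC (- e) hh) !subrK.
Qed.

Lemma TTp_Q j : TTp (x ^+ j * x' ^+ j).
Proof.
elim: j => [|j IH]; first by rewrite !expr0 mulr1; exact: TTp1.
have -> : x ^+ j.+1 * x' ^+ j.+1 =
    (x ^+ j * x' ^+ j) * ((x' ^+ j)^-1 * (x * x') * x' ^+ j).
  by rewrite exprSr exprS !mulrA (mulrK (unitrX j x'_unit)).
apply: TTpS => //; apply: TTe_conj; [exact: unitrX x'_unit|exact: qc_exp qc_x'|exact: P_TTe].
Qed.
Lemma TTp_R j : TTp (x' ^+ j * x ^+ j).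
Proof.
elim: j => [|j IH]; first by rewrite !expr0 mulr1; exact: TTp1.
have -> : x' ^+ j.+1 * x ^+ j.+1 =
    (x' ^+ j * x ^+ j) * ((x ^+ j)^-1 * (x' * x) * x ^+ j).
  by rewrite exprSr exprS !mulrA (mulrK (unitrX j x_unit)).
apply: TTpS => //; apply: TTe_conj; [exact: unitrX x_unit|exact: qc_exp qc_x|exact: P''_TTe].
Qed.

Lemma Ne_plus_E (f : V) i : (- e + f) 0 i = f 0 i - (k == i)%:R.
Proof. by rewrite [LHS]mxE [((- e : V)) 0 i]mxE evecE addrC. Qed.

Lemma x'_Hom : Hom (-1) x'.
Proof.
rewrite x'_ev; eexists; split; last reflexivity.
have H : forall f, cone0 f -> cone (- e + f) /\ (- e + f) 0 k = -1.
  move=> f [fk fc]; split; last by rewrite Ne_plus_E fk eqxx sub0r.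
  move=> i hi; rewrite Ne_plus_E.
  have -> : (k == i) = false by apply/eqP => ki; move: hi; rewrite -ki kS.
  by rewrite subr0; apply: fc.
move=> u; rewrite !inE => /orP[] /eqP -> /=; split; try exact: inA1.
  exact: H gg_cone0.
exact: H hh_cone0.
Qed.

Lemma x'pow_Hom l : Hom (- (l%:Z)) (x' ^+ l).
Proof.
elim: l => [|l IH].
  have := Hom_M (cone0_0.2); rewrite M0 mxE expr0 oppr0 //.
rewrite exprSr; apply: (Hom_mul IH x'_Hom); lia.
Qed.

Lemma xpow_Hom m : Hom m%:Z (x ^+ m).
Proof. by rewrite xpow; have := Hom_M (cone_e m%:Z); rewrite e_k. Qed.

Lemma Q_Hom m : Hom 0 (x ^+ m * x' ^+ m).
Proof. by apply: (Hom_mul (xpow_Hom m) (x'pow_Hom m)); rewrite subrr. Qed.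

Lemma Q_unit m : (x ^+ m * x' ^+ m) \is a GRing.unit.
Proof. by rewrite unitrMl ?unitrX ?x_unit ?x'_unit. Qed.

Lemma key m a (n : int) : Yel a -> - (m%:Z) <= n ->
  Hom (- n) ((x ^+ m * x' ^+ m) * (a * x' ^ n)).
Proof.
move=> ha hn.
have hq : qc (x ^+ m * x' ^+ m) by apply: qc_mul; apply: qc_exp; [exact: qc_x|exact: qc_x'].
case: (twist hq ha) => a' [ha' e1].
rewrite mulrA e1 -!mulrA.
have -> : x' ^+ m * x' ^ n = x' ^ (m%:Z + n) by rewrite exprzDr // x'_unit.
have -> : m%:Z + n = (absz (m%:Z + n))%:Z by rewrite gez0_abs //; lia.
apply: (Hom_mul (Yel_Hom0 ha') (Hom_mul (xpow_Hom m) (x'pow_Hom (absz (m%:Z + n))) (erefl _))).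
rewrite gez0_abs; lia.
Qed.

Lemma Tsp_0 : Tsp 0.
Proof. by exists [::]; rewrite ev_nil. Qed.
Lemma Tsp_add u v : Tsp u -> Tsp v -> Tsp (u + v).
Proof. by move=> [U [gU ->]] [W [gW ->]]; exists (U ++ W); rewrite ev_cat; split => //; apply: good_cat. Qed.
Lemma Tsp_mul u v : Tsp u -> Tsp v -> Tsp (u * v).
Proof.
move=> [U [gU ->]] [W [gW ->]]; exists (mulC U W); rewrite ev_mulC; split => //.
by apply: good_mulC gU gW => f g; apply: cone_add.
Qed.
Lemma Tsp_sum (I : eqType) (r : seq I) (G : I -> F) :
  (forall i, i \in r -> Tsp (G i)) -> Tsp (\sum_(i <- r) G i).
Proof.
elim: r => [|i r IH] h; first by rewrite big_nil; exact: Tsp_0.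
rewrite big_cons; apply: Tsp_add; first by apply: h; rewrite inE eqxx.
by apply: IH => j hj; apply: h; rewrite inE hj orbT.
Qed.
Lemma Tsp_Hom dg z : Hom dg z -> Tsp z.
Proof. by move=> [U [gU ->]]; exists U; split => //; apply: good_sub gU => f []. Qed.
Lemma Tsp_Yel z : Yel z -> Tsp z.
Proof. by move=> [U [gU ->]]; exists U; split => //; apply: good_sub gU => f []. Qed.

Lemma Tsp'_Yel z : Yel z -> Tsp' z.
Proof.
move=> [U [gU ->]]; exists [seq (u, 0) | u <- U]; split.
  by move=> t /mapP[u /gU hu ->].
by rewrite /evw big_map; apply: eq_bigr => u _ /=; rewrite expr0z mulr1.
Qed.
Lemma Tsp'_x'pow l : Tsp' (x' ^+ l).
Proof.
exists [:: ((1, 0), l%:Z)]; split; first by apply: goodW1; [exact: inA1|exact: cone0_0].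
by rewrite evw1 scale1r M0 mul1r.
Qed.
Lemma Tsp'_x'inv : Tsp' (x'^-1).
Proof.
exists [:: ((1, 0), -1)]; split; first by apply: goodW1; [exact: inA1|exact: cone0_0].
by rewrite evw1 scale1r M0 mul1r -exprz_inv expr1z.
Qed.
Lemma Tsp'_x : Tsp' x.
Proof.
have -> : x = (x * x') * x'^-1 by rewrite mulrK // x'_unit.
apply: Tsp'_mul; last exact: Tsp'_x'inv.
by apply: Tsp'_Yel; apply: TTe_Yel; exact: P_TTe.
Qed.
Lemma Tsp'_xpow l : Tsp' (x ^+ l).
Proof.
elim: l => [|l IH]; first by rewrite expr0; apply: Tsp'_Yel; exact: Yel_1.
by rewrite exprS; apply: Tsp'_mul => //; exact: Tsp'_x.
Qed.

Lemma evw_group W : evw W =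
  \sum_(n <- undup (map snd W)) ev [seq t.1 | t <- W & t.2 == n] * x' ^ n.
Proof.
rewrite /evw (@sum_part _ _ _ W snd (undup (map snd W))); last first.
- by move=> n; rewrite mem_undup.
- exact: undup_uniq.
apply: eq_bigr => n _; rewrite /ev big_map big_filter mulr_suml.
by apply: eq_bigr => t /eqP <-; rewrite scalerAl.
Qed.

Lemma Yel_group (W : seq ((Kq * V) * int)) (n : int) : goodW W -> Yel (ev [seq t.1 | t <- W & t.2 == n]).
Proof.
move=> gW; eexists; split; last reflexivity.
by move=> u /mapP[t]; rewrite mem_filter => /andP[_ /gW ht] ->.
Qed.

Lemma group_out (W : seq ((Kq * V) * int)) (n : int) : n \notin undup (map snd W) -> ev [seq t.1 | t <- W & t.2 == n] = 0.
Proof.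
move=> hn; rewrite /ev big_map big_filter big_seq_cond big1 // => t /andP[ht /eqP et].
by case/negP: hn; rewrite mem_undup -et; apply: map_f.
Qed.

Lemma le_sum_mem_nat (T : eqType) (r : seq T) (G : T -> nat) t :
  t \in r -> (G t <= \sum_(u <- r) G u)%N.
Proof.
elim: r => [|u r IH] //; rewrite inE big_cons => /orP[/eqP ->|ht].
  exact: leq_addr.
by apply: (leq_trans (IH ht)); rewrite leq_addl.
Qed.

Lemma split_sum (r : seq int) (j : int) (G : int -> F) : uniq r ->
  (j \notin r -> G j = 0) ->
  \sum_(i <- r) G i = G j + \sum_(i <- r | i != j) G i.
Proof.
move=> ur h; case: (boolP (j \in r)) => hj; first by rewrite (bigD1_seq j).
rewrite h // add0r [RHS]big_seq_cond [LHS]big_seq_cond; apply: eq_bigl => i.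
case: (boolP (i \in r)) => // hi /=; apply/esym/eqP => eij; move: hj; by rewrite -eij hi.
Qed.

Lemma absz_bound (r : seq int) n : n \in r ->
  - ((\sum_(i <- r) absz i)%N%:Z) <= n.
Proof.
move=> hn; have h := le_sum_mem_nat absz hn.
have h2 : - n <= (absz n)%:Z by rewrite abszE -normrN ler_norm.
move: h h2; set s := (\sum_(i <- r) absz i)%N; set a := absz n.
move=> h h2.
have h3 : (a%:Z <= s%:Z) by rewrite lez_nat.
rewrite lerNl; apply: (le_trans h2 h3).
Qed.

Lemma dir1 (p : Kq) (y : F) : inA p -> p != 0 -> Tsp' y -> Tsp (p *: y) -> Tsp y.
Proof.
move=> hp p0 [W [gW ->]] hT.
set ns := undup (map snd W).
pose A (n : int) := ev [seq t.1 | t <- W & t.2 == n].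
have hA : forall n, Yel (A n) by move=> n; apply: Yel_group.
pose m := (\sum_(n' <- ns) absz n')%N.
have hm : forall n', n' \in ns -> - (m%:Z) <= n' by move=> n' hn'; apply: absz_bound.
pose Q := x ^+ m * x' ^+ m.
have hsum : evw W = \sum_(n <- ns) A n * x' ^ n by rewrite evw_group.
rewrite hsum; apply: Tsp_sum => n hn.
case: n hn => [l|j'] hn.
  by apply: Tsp_mul; [exact: Tsp_Yel (hA _)|exact: Tsp_Hom (x'pow_Hom l)].
pose j := j'.+1.
case: (Tsp_split (j%:Z) hT) => z1 [z2 [h1 [h2 e12]]].
have E : p *: (Q * (A (Negz j') * x' ^ (Negz j'))) +
         p *: \sum_(n' <- ns | n' != Negz j') Q * (A n' * x' ^ n') = Q * z1 + Q * z2.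
  rewrite -mulrDr -e12 hsum -scalerAr mulr_sumr (bigD1_seq (Negz j') hn (undup_uniq _)) /=.
  by rewrite scalerDr.
have hj : - (Negz j') = j%:Z by rewrite NegzE opprK.
have hneq : forall n', n' != Negz j' -> - n' != j%:Z.
  by move=> n' hn'; apply: contra hn' => /eqP h; apply/eqP; rewrite NegzE; lia.
have hom1 : Hom j%:Z (p *: (Q * (A (Negz j') * x' ^ (Negz j')))).
  by apply: Hom_scale hp _; rewrite -hj; apply: key (hA _) (hm _ hn).
have nod1 : NoD j%:Z (p *: \sum_(n' <- ns | n' != Negz j') Q * (A n' * x' ^ n')).
  apply: NoD_scale hp _; apply: NoD_sum => n' hn' hneq'.
  exact: Hom_NoD (key (hA n') (hm n' hn')) (hneq n' hneq').
have E2 := HU hom1 nod1 (Hom_mul (Q_Hom m) h1 (esym (add0r _))) (NoD_mul0 (Q_Hom m) h2) E.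
case: (Hom_shift h1) => c [hc ez1].
have W_unit : x' ^+ j \is a GRing.unit by apply: unitrX; exact: x'_unit.
have -> : x' ^ (Negz j') = (x' ^+ j)^-1 by [].
move: E2; rewrite ez1 scalerAr Mpow -/x => /(mulrI (Q_unit m)) E2.
have {}E2 : p *: (A (Negz j') * (x' ^+ j)^-1) = c * x ^+ j by exact: E2.
have E3 : c * (x ^+ j * x' ^+ j) = p *: A (Negz j').
  by rewrite mulrA -[c * _]/(c * x ^+ j) -E2 -scalerAl mulrVK.
case: (L2 hp (TTp_Q j) hc (hA _) E3) => v [hv ev].
move: E2; rewrite ev -scalerAl => /(scalerI p0) ->.
by apply: Tsp_mul; [exact: Tsp_Yel hv|exact: Tsp_Hom (xpow_Hom j)].
Qed.

Lemma dir2 (p : Kq) (y : F) : inA p -> p != 0 -> Tsp y -> Tsp' (p *: y) -> Tsp' y.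
Proof.
move=> hp p0 hy [W [gW eW]].
case: (Tsp_group hy) => ds [G [hG [uds ey]]].
set ns := undup (map snd W).
pose A (n : int) := ev [seq t.1 | t <- W & t.2 == n].
have hA : forall n, Yel (A n) by move=> n; apply: Yel_group.
pose m := (\sum_(n' <- ns) absz n')%N.
have hm : forall n', n' \in ns -> - (m%:Z) <= n' by move=> n' hn'; apply: absz_bound.
pose Q := x ^+ m * x' ^+ m.
have hsum : evw W = \sum_(n <- ns) A n * x' ^ n by rewrite evw_group.
rewrite ey; apply: Tsp'_sum => dg hdg.
case: dg hdg => [l|l'] hdg.
  case: (Hom_shift (hG l)) => c [hc ->]; rewrite Mpow -/x.
  by apply: Tsp'_mul; [exact: Tsp'_Yel hc|exact: Tsp'_xpow].
pose l := l'.+1.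
have E : p *: (Q * G (Negz l')) + p *: \sum_(dg' <- ds | dg' != Negz l') Q * G dg' =
         Q * (A l%:Z * x' ^ l%:Z) + \sum_(n' <- ns | n' != l%:Z) Q * (A n' * x' ^ n').
  transitivity (Q * (p *: y)).
    by rewrite ey -scalerAr mulr_sumr (bigD1_seq (Negz l') hdg uds) scalerDr.
  rewrite eW hsum mulr_sumr (split_sum (j := l%:Z) (undup_uniq _)) // => hn.
  by rewrite /A group_out // mul0r mulr0.
have hl : Negz l' = - (l%:Z) by rewrite NegzE.
have hom1 : Hom (Negz l') (p *: (Q * G (Negz l'))).
  by apply: Hom_scale hp _; apply: Hom_mul (Q_Hom m) (hG _) _; rewrite add0r.
have nod1 : NoD (Negz l') (p *: \sum_(dg' <- ds | dg' != Negz l') Q * G dg').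
  apply: NoD_scale hp _; apply: NoD_sum => dg' _ hneq.
  by apply: Hom_NoD (Hom_mul (Q_Hom m) (hG dg') (esym (add0r _))) _.
have hom2 : Hom (Negz l') (Q * (A l%:Z * x' ^ l%:Z)).
  by rewrite hl; apply: key (hA _) _; lia.
have nod2 : NoD (Negz l') (\sum_(n' <- ns | n' != l%:Z) Q * (A n' * x' ^ n')).
  apply: NoD_sum => n' hn' hneq; apply: Hom_NoD (key (hA n') (hm n' hn')) _.
  by apply: contra hneq => /eqP h; apply/eqP; move: h; rewrite NegzE; lia.
have E2 := HU hom1 nod1 hom2 nod2 E.
case: (Hom_shift (hG (Negz l'))) => c [hc ez].
move: E2; rewrite ez scalerAr Mpow -/x => /(mulrI (Q_unit m)) E2.
have {}E2 : p *: (c * (x ^+ l)^-1) = A l%:Z * x' ^+ l by exact: E2.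
have X_unit : x ^+ l \is a GRing.unit by apply: unitrX; exact: x_unit.
have E3 : A l%:Z * (x' ^+ l * x ^+ l) = p *: c.
  by rewrite mulrA -E2 -scalerAl mulrVK.
case: (L2 hp (TTp_R l) (hA _) hc E3) => v [hv ev].
have -> : x ^ (Negz l') = (x ^+ l)^-1 by [].
move: E2; rewrite ev -scalerAl => /(scalerI p0) ->.
by apply: Tsp'_mul; [exact: Tsp'_Yel hv|exact: Tsp'_x'pow].
Qed.

End Frame.

Theorem proposition5p10 (F : unitAlgType Kq) (N : nat)
  (ex inv : {set 'I_N}) (M : 'rV[int]_N -> F) (L B : 'M[int]_N)
  (p : Kq) (k : 'I_N) :
  division_ring F ->
  toric_frame M L -> compatible ex L B ->
  [disjoint inv & ex] ->
  primeA p -> k \in ex ->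
  forall z : F,
    (Tge (fun i => M (evec i)) (ex :|: inv) z /\
     exists y, Tge (mu_basis M B k) (ex :|: inv) y /\ z = p *: y)
    <->
    ((exists y, Tge (fun i => M (evec i)) (ex :|: inv) y /\ z = p *: y) /\
     Tge (mu_basis M B k) (ex :|: inv) z).
Proof.
move=> divF [skL M0 MM Mind _] comp _ [hp p0 _ _] kex z.
have kS : k \in ex :|: inv by rewrite in_setU kex.
case: comp => dd hdd; case: (hdd k kex) => dpos heq.
have lamb : forall f : 'rV_N, bform L (bcol B k) f = (dd k)%:Z * f 0 k.
  move=> f; rewrite /bform /bcol !mxE.
  under eq_bigr => j _ do rewrite !mxE.
  under eq_bigr => j _ do under eq_bigr => i _ do rewrite mxE.
  under eq_bigr => j _ do rewrite heq.
  rewrite (bigD1 k) //= eqxx mul1r big1 ?addr0 // => j hj.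
  by rewrite (negbTE hj) !mul0r.
have dpos' : 0 < (dd k)%:Z by rewrite ltz_nat.
have genk : mu_basis M B k k = x' M k (bcol B k) by rewrite /mu_basis eqxx.
have geni : forall i, i != k -> mu_basis M B k i = M (evec i).
  by move=> i hi; rewrite /mu_basis (negbTE hi).
split.
- case=> hz [y [hy ez]].
  have hy' : Tsp M (ex :|: inv) y.
    apply: (dir1 skL M0 MM Mind kS dpos' lamb divF hp p0).
      exact: (T'_to_sp skL M0 MM Mind kS dpos' lamb divF genk geni hy).
    by rewrite -ez; exact: (T_to_sp skL M0 MM hz).
  split; first by exists y; split => //; exact: (sp_to_T skL M0 MM kS dpos' hy').
  by rewrite ez; apply: Tge_scale.
- case=> [[y [hy ez]] hz].
  have hy' : Tsp' M (ex :|: inv) k (bcol B k) y.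
    apply: (dir2 skL M0 MM Mind kS dpos' lamb divF hp p0).
      exact: (T_to_sp skL M0 MM hy).
    by rewrite -ez; exact: (T'_to_sp skL M0 MM Mind kS dpos' lamb divF genk geni hz).
  split; first by rewrite ez; apply: Tge_scale.
  by exists y; split => //; exact: (sp_to_T' skL M0 MM kS dpos' genk geni hy').
Qed.
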